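(* Every binding polynomial functor on $\mathsf{Nom}$ has a canonical locally monotone extension to $\mathrm{Kl}(\mathcal{P}_{\mathsf{ufs}})$.
   Context: Fix a countably infinite set $\mathbb{A}$ of names; $\mathsf{Nom}$ is the category of nominal sets and equivariant maps. $[\mathbb{A}]X$ denotes the abstraction set: the quotient of $\mathbb{A}\times X$ by $(a,x)\sim(b,y)$ iff $(a\,c)\cdot x=(b\,c)\cdot y$ for some fresh name $c$, with classes $\langle a\rangle x$. $\mathcal{P}_{\mathsf{ufs}}$ is the monad of uniformly finitely supported subsets (subsets $A$ with $\bigcup_{x\in A}\mathrm{supp}(x)$ finite), with unit $x\mapsto\{x\}$ and multiplication union; $\mathrm{Kl}(\mathcal{P}_{\mathsf{ufs}})$ is its Kleisli category and $J\colon\mathsf{Nom}\to\mathrm{Kl}(\mathcal{P}_{\mathsf{ufs}})$ the canonical functor. Binding polynomial functors are those generated by the grammar $F::=C\mid\mathrm{Id}\mid[\mathbb{A}](-)\mid F\times F\mid\coprod_{i\in I}F_i$, with $C$ ranging over constant functors and $I$ arbitrary. An extension of $F$ is an endofunctor $\overline{F}$ on $\mathrm{Kl}(\mathcal{P}_{\mathsf{ufs}})$ with $\overline{F}J=JF$; locally monotone means monotone on hom-sets ordered pointwise by inclusion. The canonical extension is built along the grammar: constants and identity extend trivially; coproducts via $\overline{F+G}(f)=[T\mathsf{inl},T\mathsf{inr}]\cdot(\overline{F}f+\overline{G}f)$; finite products via the double strength $d\colon TX\times TY\to T(X\times Y)$ of the commutative monad $\mathcal{P}_{\mathsf{ufs}}$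 (with strength $(x,S)\mapsto\{(x,s):s\in S\}$), i.e. $\overline{F\times G}(f)=d\cdot(\overline{F}f\times\overline{G}f)$; and abstraction via the distributive law $\langle a\rangle S\mapsto\{\langle a\rangle s: s\in S\}$. *)

(* Defs.v *)
From Stdlib Require Import List PeanoNat ClassicalEpsilon.
Import ListNotations.

Record perm := Perm {
  pf : nat -> nat;
  pinv : nat -> nat;
  pf_pinv : forall a, pf (pinv a) = a;
  pinv_pf : forall a, pinv (pf a) = a;
  pfin : exists l : list nat, forall a, ~ In a l -> pf a = a }.

Definition pid : perm.
Proof.
  refine (Perm (fun a => a) (fun a => a) _ _ _); try reflexivity.
  exists []; reflexivity.
Defined.

(* pcomp p q = p o q  (q acts first) *)
Definition pcomp (p q : perm) : perm.
Proof.
  refine (Perm (fun a => pf p (pf q a)) (fun a => pinv q (pinv p a)) _ _ _).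
  - intro a; rewrite pf_pinv, pf_pinv; reflexivity.
  - intro a; rewrite pinv_pf, pinv_pf; reflexivity.
  - destruct (pfin p) as [l1 H1]; destruct (pfin q) as [l2 H2].
    exists (l1 ++ l2); intros a Ha.
    rewrite H2, H1; [reflexivity| |]; intro Hin; apply Ha; apply in_or_app; auto.
Defined.

Definition sw (a b c : nat) : nat :=
  if Nat.eq_dec c a then b else if Nat.eq_dec c b then a else c.

Lemma sw_inv a b c : sw a b (sw a b c) = c.
Proof.
  unfold sw;
  destruct (Nat.eq_dec c a) as [E1|E1];
  [ destruct (Nat.eq_dec b a) as [E2|E2];
    [ subst; destruct (Nat.eq_dec a a); congruence
    | destruct (Nat.eq_dec b b); congruence ]
  | destruct (Nat.eq_dec c b) as [E2|E2];
    [ destruct (Nat.eq_dec a a); congruence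
    | destruct (Nat.eq_dec c a); [congruence|];
      destruct (Nat.eq_dec c b); congruence ] ].
Qed.

Definition swap (a b : nat) : perm.
Proof.
  refine (Perm (sw a b) (sw a b) (sw_inv a b) (sw_inv a b) _).
  exists [a; b]; intros c Hc; unfold sw.
  destruct (Nat.eq_dec c a); [subst; exfalso; apply Hc; left; reflexivity|].
  destruct (Nat.eq_dec c b); [subst; exfalso; apply Hc; right; left; reflexivity|].
  reflexivity.
Defined.

(* A (pre)nominal set: a carrier with a permutation action; the nominal-set
   axioms are the separate predicate [is_nominal]. *)
Record Nom := MkNom { car :> Type; act : perm -> car -> car }.
Arguments act {n} _ _.

Definition supports (X : Nom) (L : list nat) (x : X) : Prop :=
  forall p : perm, (forall a, In a L -> pf p a = a) -> act p x = x.

Definition supp (X : Nom) (x : X) (a : nat) : Prop :=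
  forall L, supports X L x -> In a L.

Definition is_nominal (X : Nom) : Prop :=
  (forall x : X, act pid x = x) /\
  (forall (p q : perm) (x : X), act (pcomp p q) x = act p (act q x)) /\
  (forall x : X, exists L, supports X L x).

Definition equivariant (X Y : Nom) (f : X -> Y) : Prop :=
  forall (p : perm) (x : X), f (act p x) = act p (f x).

Definition ProdN (X Y : Nom) : Nom :=
  MkNom (car X * car Y) (fun p u => (act p (fst u), act p (snd u))).

Definition SumN (I : Type) (Xs : I -> Nom) : Nom :=
  MkNom {i : I & car (Xs i)} (fun p u => existT _ (projT1 u) (act p (projT2 u))).

(* abstraction [A]X: quotient of A x X by alpha-equivalence *)
Definition alpha (X : Nom) (u v : nat * X) : Prop :=
  let (a, x) := u in let (b, y) := v in
  exists c : nat, c <> a /\ c <> b /\ ~ supp X x c /\ ~ supp X y c /\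
    act (swap a c) x = act (swap b c) y.

Definition abs_car (X : Nom) : Type :=
  { P : nat * X -> Prop | exists u, P = alpha X u }.

Definition cls (X : Nom) (u : nat * X) : abs_car X :=
  exist _ (alpha X u) (ex_intro _ u eq_refl).

Definition rep (X : Nom) (q : abs_car X) : nat * X :=
  proj1_sig (constructive_indefinite_description _ (proj2_sig q)).

Definition AbsN (X : Nom) : Nom :=
  MkNom (abs_car X)
    (fun p q => let (a, x) := rep X q in cls X (pf p a, act p x)).

(* subsets of X are predicates X -> Prop *)
Definition ufs (X : Nom) (S : X -> Prop) : Prop :=
  exists L : list nat, forall x, S x -> forall a, supp X x a -> In a L.

Definition pset_act (X : Nom) (p : perm) (S : X -> Prop) : X -> Prop :=
  fun y => exists s, S s /\ y = act p s.

(* Kleisli morphisms X -> P_ufs Y : equivariant maps into uniformly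
   finitely supported subsets *)
Definition kl_hom (X Y : Nom) (f : X -> Y -> Prop) : Prop :=
  (forall x, ufs Y (f x)) /\
  (forall (p : perm) (x : X) (y : Y), f (act p x) y <-> pset_act Y p (f x) y).

Definition kl_id (X : Nom) : X -> X -> Prop := fun x y => y = x.

Definition kl_comp (X Y Z : Nom) (g : Y -> Z -> Prop) (f : X -> Y -> Prop)
  : X -> Z -> Prop := fun x z => exists y, f x y /\ g y z.

Definition J (X Y : Nom) (f : X -> Y) : X -> Y -> Prop := fun x y => y = f x.

Definition kl_eq (X Y : Nom) (f g : X -> Y -> Prop) : Prop :=
  forall x y, f x y <-> g x y.
Definition kl_le (X Y : Nom) (f g : X -> Y -> Prop) : Prop :=
  forall x y, f x y -> g x y.

Inductive BPF : Type :=
| BConst (C : Nom) (HC : is_nominal C)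
| BId
| BAbs
| BProd (F G : BPF)
| BCoprod (I : Type) (Fs : I -> BPF).

Fixpoint obj (F : BPF) (X : Nom) : Nom :=
  match F with
  | BConst C _ => C
  | BId => X
  | BAbs => AbsN X
  | BProd F1 F2 => ProdN (obj F1 X) (obj F2 X)
  | BCoprod Ix Fs => SumN Ix (fun i => obj (Fs i) X)
  end.

Fixpoint fmap (F : BPF) (X Y : Nom) (f : X -> Y) : obj F X -> obj F Y :=
  match F return obj F X -> obj F Y with
  | BConst C _ => fun c => c
  | BId => f
  | BAbs => fun q => let (a, x) := rep X q in cls Y (a, f x)
  | BProd F1 F2 => fun u => (fmap F1 X Y f (fst u), fmap F2 X Y f (snd u))
  | BCoprod Ix Fs => fun u =>
      existT (fun i => car (obj (Fs i) Y)) (projT1 u) (fmap (Fs (projT1 u)) X Y f (projT2 u))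
  end.

(* the canonical extension to Kl(P_ufs), built along the grammar:
   constants/identity trivially, <a>x |-> { <a>s | s in f x } (distributive
   law after [A]f), products via the double strength d, coproducts via
   [T inl, T inr] (i.e. (i,u) |-> { (i,s) | s in F_i f u }). *)
Fixpoint ext (F : BPF) (X Y : Nom) (f : X -> Y -> Prop) : obj F X -> obj F Y -> Prop :=
  match F return obj F X -> obj F Y -> Prop with
  | BConst C _ => fun c c' => c' = c
  | BId => f
  | BAbs => fun q q' => let (a, x) := rep X q in exists s, f x s /\ q' = cls Y (a, s)
  | BProd F1 F2 => fun u v =>
      ext F1 X Y f (fst u) (fst v) /\ ext F2 X Y f (snd u) (snd v)
  | BCoprod Ix Fs => fun u v =>
      exists w, ext (Fs (projT1 u)) X Y f (projT2 u) w /\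
        v = existT (fun i => car (obj (Fs i) Y)) (projT1 u) w
  end.

(* Main.v *)
Require Import Defs.
From Stdlib Require Import List PeanoNat Lia Classical ClassicalEpsilon FunctionalExtensionality PropExtensionality ProofIrrelevance.
Import ListNotations.

Ltac sw_solve :=
  unfold sw;
  repeat match goal with
  | |- context [Nat.eq_dec ?x ?y] =>
      lazymatch x with context [Nat.eq_dec _ _] => fail | _ =>
      lazymatch y with context [Nat.eq_dec _ _] => fail | _ =>
      destruct (Nat.eq_dec x y) end end
  end; try lia.

Lemma perm_eq (p q : perm) : (forall a, pf p a = pf q a) -> p = q.
Proof.
  destruct p as [f g fg gf fin], q as [f' g' fg' gf' fin']; simpl; intro H.
  assert (f = f') by (extensionality a; apply H). subst f'.
  assert (g = g').
  { extensionality a. rewrite <- (gf' (g a)), fg. reflexivity. }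
  subst g'. f_equal; apply proof_irrelevance.
Qed.

Lemma pf_inj (p : perm) a b : pf p a = pf p b -> a = b.
Proof. intro E. rewrite <- (pinv_pf p a), E, pinv_pf. reflexivity. Qed.

Definition pinvp (p : perm) : perm.
Proof.
  refine (Perm (pinv p) (pf p) (pinv_pf p) (pf_pinv p) _).
  destruct (pfin p) as [l Hl]. exists l. intros a Ha.
  assert (E := pinv_pf p a). rewrite (Hl a Ha) in E. exact E.
Defined.

Section NomLemmas.
Variable X : Nom.
Hypothesis HX : is_nominal X.

Lemma act_id (x : X) : act pid x = x.
Proof. apply (proj1 HX). Qed.

Lemma actc p q (x : X) : act p (act q x) = act (pcomp p q) x.
Proof. symmetry. apply (proj1 (proj2 HX)). Qed.

Lemma act_inv p (x : X) : act (pinvp p) (act p x) = x.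
Proof.
  rewrite actc. rewrite <- (act_id x) at 2. f_equal. apply perm_eq. intro a. simpl. apply pinv_pf.
Qed.

Lemma swap_invol a b (x : X) : act (swap a b) (act (swap a b) x) = x.
Proof.
  rewrite actc. rewrite <- (act_id x) at 2. f_equal. apply perm_eq. intro c. simpl. apply sw_inv.
Qed.

Lemma supports_act L p (x : X) : supports X L x -> supports X (map (pf p) L) (act p x).
Proof.
  intros HL q Hq.
  assert (E: act (pcomp (pinvp p) (pcomp q p)) x = x).
  { apply HL. intros a Ha. simpl. rewrite Hq. apply pinv_pf. apply in_map; auto. }
  rewrite <- E at 2. rewrite !actc. f_equal. apply perm_eq. intro a; simpl. rewrite pf_pinv. reflexivity.
Qed.

Lemma nsupp_act p (x : X) c : ~ supp X x c -> ~ supp X (act p x) (pf p c).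
Proof.
  intros H1 H2. apply H1. intros L HL. specialize (H2 _ (supports_act L p x HL)).
  apply in_map_iff in H2. destruct H2 as [a [Ea Ha]]. apply pf_inj in Ea. subst; auto.
Qed.

Lemma supp_act p (x : X) c : supp X x c -> supp X (act p x) (pf p c).
Proof.
  intros H. apply NNPP. intro N. apply (nsupp_act (pinvp p)) in N.
  rewrite act_inv in N. simpl in N. rewrite pinv_pf in N. auto.
Qed.

Lemma supp_fin (x : X) : exists L, forall c, supp X x c -> In c L.
Proof.
  destruct HX as [_ [_ H]]. destruct (H x) as [L HL]. exists L. intros c Hc. apply Hc, HL.
Qed.

End NomLemmas.

Lemma nsupp_ex (X : Nom) (x : X) c : ~ supp X x c -> exists L, supports X L x /\ ~ In c L.
Proof.
  intro H. unfold supp in H. apply not_all_ex_not in H. destruct H as [L HL].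
  apply imply_to_and in HL. exists L; exact HL.
Qed.

Lemma le_sum L a : In a L -> a <= fold_right plus 0 L.
Proof.
  induction L as [|b L IH]; simpl; [tauto|]. intros [->|H]; [lia| specialize (IH H); lia].
Qed.

Lemma fresh_name (L : list nat) : exists c, ~ In c L.
Proof. exists (S (fold_right plus 0 L)). intro H. apply le_sum in H. lia. Qed.

Lemma swap_fresh (X : Nom) (HX : is_nominal X) (x : X) c d :
  ~ supp X x c -> ~ supp X x d -> act (swap c d) x = x.
Proof.
  intros Hc Hd.
  destruct (Nat.eq_dec c d) as [<-|Ncd].
  { rewrite <- (act_id X HX x) at 2. f_equal. apply perm_eq. intro a; simpl. sw_solve. }
  destruct (nsupp_ex _ _ _ Hc) as [L1 [H1 N1]]. destruct (nsupp_ex _ _ _ Hd) as [L2 [H2 N2]].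
  destruct (fresh_name (c :: d :: L1 ++ L2)) as [e He]. simpl in He.
  assert (E1 : act (swap c e) x = x).
  { apply H1. intros a Ha. simpl. unfold sw.
    destruct (Nat.eq_dec a c); [subst; contradiction|].
    destruct (Nat.eq_dec a e); [subst; exfalso; apply He; rewrite in_app_iff; auto|]. reflexivity. }
  assert (E2 : act (swap d e) x = x).
  { apply H2. intros a Ha. simpl. unfold sw.
    destruct (Nat.eq_dec a d); [subst; contradiction|].
    destruct (Nat.eq_dec a e); [subst; exfalso; apply He; rewrite in_app_iff; auto|]. reflexivity. }
  assert (P: swap c d = pcomp (swap c e) (pcomp (swap d e) (swap c e))).
  { apply perm_eq; intro a; simpl. assert (e <> c) by (intro; apply He; auto). assert (e <> d) by (intro; apply He; auto). sw_solve. }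
  rewrite P, <- !(actc X HX), E1, E2, E1. reflexivity.
Qed.

Lemma sw_conj (p : perm) a d z : pf p (sw a d z) = sw (pf p a) (pf p d) (pf p z).
Proof.
  unfold sw.
  destruct (Nat.eq_dec z a) as [->|N1].
  - destruct (Nat.eq_dec (pf p a) (pf p a)); congruence.
  - destruct (Nat.eq_dec (pf p z) (pf p a)) as [E|_]; [apply pf_inj in E; congruence|].
    destruct (Nat.eq_dec z d) as [->|N2].
    + destruct (Nat.eq_dec (pf p d) (pf p d)); congruence.
    + destruct (Nat.eq_dec (pf p z) (pf p d)) as [E|_]; [apply pf_inj in E; congruence|]. reflexivity.
Qed.

Section Alpha.
Variable X : Nom.
Hypothesis HX : is_nominal X.

Lemma alpha_any a (x : X) b y c : alpha X (a,x) (b,y) -> c <> a -> c <> b ->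
  ~ supp X x c -> ~ supp X y c -> act (swap a c) x = act (swap b c) y.
Proof.
  intros [d [Da [Db [Dx [Dy E]]]]] Ca Cb Cx Cy.
  destruct (Nat.eq_dec c d) as [->|Ncd]; [exact E|].
  assert (P: forall a', a' <> c -> a' <> d -> swap a' c = pcomp (swap c d) (pcomp (swap a' d) (swap c d))).
  { intros; apply perm_eq; intro z; simpl; sw_solve. }
  rewrite (P a), (P b) by auto. rewrite <- !(actc X HX).
  rewrite (swap_fresh X HX x c d), (swap_fresh X HX y c d) by auto. rewrite E. reflexivity.
Qed.

Lemma alpha_refl a (x : X) : alpha X (a,x) (a,x).
Proof.
  destruct (supp_fin X HX x) as [L HL]. destruct (fresh_name (a :: L)) as [c Hc].
  exists c. simpl in Hc. repeat split; auto; intro; apply Hc; auto.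
Qed.

Lemma alpha_sym a (x : X) b y : alpha X (a,x) (b,y) -> alpha X (b,y) (a,x).
Proof. intros [d [Da [Db [Dx [Dy E]]]]]. exists d; repeat split; auto. Qed.

Lemma alpha_trans a (x : X) b y c z : alpha X (a,x) (b,y) -> alpha X (b,y) (c,z) -> alpha X (a,x) (c,z).
Proof.
  intros H1 H2.
  destruct (supp_fin X HX x) as [Lx HLx]. destruct (supp_fin X HX y) as [Ly HLy].
  destruct (supp_fin X HX z) as [Lz HLz].
  destruct (fresh_name (a :: b :: c :: Lx ++ Ly ++ Lz)) as [e He]. simpl in He.
  assert (e <> a) by (intro; apply He; auto).
  assert (e <> b) by (intro; apply He; auto).
  assert (e <> c) by (intro; apply He; auto).
  assert (~ supp X x e) by (intro Hs; apply He; right; right; right; apply in_or_app; left; auto).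
  assert (~ supp X y e) by (intro Hs; apply He; right; right; right; apply in_or_app; right; apply in_or_app; left; auto).
  assert (~ supp X z e) by (intro Hs; apply He; right; right; right; apply in_or_app; right; apply in_or_app; right; auto).
  exists e. repeat split; auto.
  rewrite (alpha_any a x b y e H1), (alpha_any b y c z e H2); auto.
Qed.

Lemma alpha_equiv p a (x : X) b y : alpha X (a,x) (b,y) ->
  alpha X (pf p a, act p x) (pf p b, act p y).
Proof.
  intros [d [Da [Db [Dx [Dy E]]]]]. exists (pf p d).
  repeat split.
  - intro H; apply pf_inj in H; auto.
  - intro H; apply pf_inj in H; auto.
  - apply nsupp_act; auto.
  - apply nsupp_act; auto.
  - assert (C: forall a', act (swap (pf p a') (pf p d)) (act p x) = act p (act (swap a' d) x) /\
                           act (swap (pf p a') (pf p d)) (act p y) = act p (act (swap a' d) y)).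
    { intro a'. rewrite !(actc X HX). split; f_equal; apply perm_eq; intro z; simpl; symmetry; apply sw_conj. }
    rewrite (proj1 (C a)), (proj2 (C b)), E. reflexivity.
Qed.

End Alpha.

Lemma sig_eq {A} (P : A -> Prop) (u v : sig P) : proj1_sig u = proj1_sig v -> u = v.
Proof. destruct u, v; simpl; intros; subst; f_equal; apply proof_irrelevance. Qed.

Lemma cls_eq X (HX : is_nominal X) a (x : X) b y : alpha X (a,x) (b,y) -> cls X (a,x) = cls X (b,y).
Proof.
  intro H. apply sig_eq. simpl. extensionality w. destruct w as [c z].
  apply propositional_extensionality. split; intro H'.
  - eapply alpha_trans; eauto. apply alpha_sym; auto.
  - eapply alpha_trans; eauto.
Qed.

Lemma rep_spec X (q : abs_car X) : proj1_sig q = alpha X (rep X q).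
Proof.
  unfold rep. destruct (constructive_indefinite_description _ (proj2_sig q)) as [u Hu]. exact Hu.
Qed.

Lemma cls_rep X (q : abs_car X) : cls X (rep X q) = q.
Proof. apply sig_eq. simpl. symmetry. apply rep_spec. Qed.

Lemma rep_cls X (HX : is_nominal X) a (x : X) : alpha X (a,x) (rep X (cls X (a,x))).
Proof.
  assert (E := rep_spec X (cls X (a,x))). simpl in E.
  destruct (rep X (cls X (a,x))) as [b y]. rewrite E. apply alpha_refl; auto.
Qed.

Lemma act_cls X (HX : is_nominal X) p a (x : X) :
  @act (AbsN X) p (cls X (a,x)) = cls X (pf p a, act p x).
Proof.
  assert (R := rep_cls X HX a x). simpl.
  destruct (rep X (cls X (a,x))) as [b y]. apply cls_eq; auto. apply alpha_sym; auto.
  apply alpha_equiv; auto.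
Qed.

Lemma ufs_supp X Y (HX : is_nominal X) (HY : is_nominal Y) f (Hf : kl_hom X Y f) x s d :
  f x s -> supp Y s d -> supp X x d.
Proof.
  destruct Hf as [Hu He]. intros Hs Hd. apply NNPP; intro Nx.
  destruct (Hu x) as [L HL]. destruct (supp_fin X HX x) as [Lx HLx].
  destruct (fresh_name (d :: L ++ Lx)) as [e He']. simpl in He'.
  assert (Ex: act (swap d e) x = x).
  { apply swap_fresh; auto. intro H; apply He'; right; apply in_or_app; right; apply HLx; auto. }
  assert (H := proj2 (He (swap d e) x (act (swap d e) s)) (ex_intro _ s (conj Hs eq_refl))).
  rewrite Ex in H.
  assert (Hd' := supp_act Y HY (swap d e) s d Hd).
  replace (pf (swap d e) d) with e in Hd' by (simpl; sw_solve).
  apply He'. right. apply in_or_app. left. exact (HL _ H e Hd').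
Qed.

Lemma b_not_supp X (HX : is_nominal X) a (x : X) b y :
  alpha X (a,x) (b,y) -> a <> b -> ~ supp X x b.
Proof.
  intros [c [Ca [Cb [Cx [Cy E]]]]] Nab Hb.
  assert (H1 := supp_act X HX (swap a c) x b Hb).
  replace (pf (swap a c) b) with b in H1 by (simpl; sw_solve).
  rewrite E in H1.
  assert (H2 := supp_act X HX (swap b c) _ b H1).
  rewrite swap_invol in H2 by auto.
  replace (pf (swap b c) b) with c in H2 by (simpl; sw_solve). auto.
Qed.

Lemma abs_transfer X Y (HX : is_nominal X) (HY : is_nominal Y) f (Hf : kl_hom X Y f)
  a (x : X) b y s : alpha X (a,x) (b,y) -> f x s -> exists s', f y s' /\ alpha Y (a,s) (b,s').
Proof.
  intros Hal Hs.
  destruct (Nat.eq_dec a b) as [<-|Nab].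
  - assert (x = y).
    { destruct Hal as [c [_ [_ [_ [_ E]]]]].
      rewrite <- (swap_invol X HX a c x), E, swap_invol; auto. }
    subst y. exists s. split; auto. apply alpha_refl; auto.
  - destruct (supp_fin X HX x) as [Lx HLx]. destruct (supp_fin X HX y) as [Ly HLy].
    destruct (supp_fin Y HY s) as [Ls HLs].
    destruct (fresh_name (a :: b :: Lx ++ Ly ++ Ls)) as [c Hc]. simpl in Hc.
    assert (c <> a) by (intro; apply Hc; auto).
    assert (c <> b) by (intro; apply Hc; auto).
    assert (Nx : ~ supp X x c) by (intro Hs'; apply Hc; right; right; apply in_or_app; left; auto).
    assert (Ny : ~ supp X y c) by (intro Hs'; apply Hc; right; right; apply in_or_app; right; apply in_or_app; left; auto).
    assert (Ns : ~ supp Y s c) by (intro Hs'; apply Hc; right; right; apply in_or_app; right; apply in_or_app; right; auto).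
    assert (E := alpha_any X HX a x b y c Hal ltac:(auto) ltac:(auto) Nx Ny).
    set (pi := pcomp (swap b c) (swap a c)).
    assert (Ey : y = act pi x).
    { unfold pi. rewrite <- (actc X HX), E, swap_invol; auto. }
    exists (act pi s). split.
    + rewrite Ey. apply (proj2 Hf). exists s; auto.
    + assert (Nb : ~ supp Y s b).
      { intro Hb. apply (b_not_supp X HX a x b y Hal Nab). eapply ufs_supp; eauto. }
      exists c. repeat split; auto.
      * assert (H' := nsupp_act Y HY pi s b Nb).
        replace (pf pi b) with c in H' by (unfold pi; simpl; sw_solve). exact H'.
      * unfold pi. rewrite <- (actc Y HY), swap_invol; auto.
Qed.

Lemma abs_iff X Y (HX : is_nominal X) (HY : is_nominal Y) f (Hf : kl_hom X Y f) a (x : X) (q' : AbsN Y) :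
  ext BAbs X Y f (cls X (a,x)) q' <-> exists s, f x s /\ q' = cls Y (a,s).
Proof.
  assert (R := rep_cls X HX a x). cbn [ext].
  destruct (rep X (cls X (a,x))) as [b y].
  split; intros [s [Hs ->]].
  - destruct (abs_transfer X Y HX HY f Hf b y a x s (alpha_sym X a x b y R) Hs) as [s' [H1 H2]].
    exists s'. split; auto. apply cls_eq; auto.
  - destruct (abs_transfer X Y HX HY f Hf a x b y s R Hs) as [s' [H1 H2]].
    exists s'. split; auto. apply cls_eq; auto.
Qed.

Lemma L_hom (F : BPF) : forall (X Y : Nom) (f : X -> Y -> Prop),
  is_nominal X -> is_nominal Y -> kl_hom X Y f ->
  kl_hom (obj F X) (obj F Y) (ext F X Y f).
Proof.
  induction F as [C HC| | |F1 IH1 F2 IH2|I Fs IH]; intros X Y f HX HY Hf.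
  - split.
    + intro c. destruct (supp_fin C HC c) as [L HL]. exists L. intros c' E a Ha.
      simpl in E. subst. auto.
    + intros p c c'. simpl. split; [intros ->; exists c; auto | intros [s [-> ->]]; auto].
  - exact Hf.
  - split.
    + intro q. cbn [ext obj]. destruct (rep X q) as [a x] eqn:E.
      destruct (proj1 Hf x) as [L HL]. exists (a :: L).
      intros q' [s [Hs ->]] d Hd. simpl.
      destruct (Nat.eq_dec a d) as [|Nd]; [left; auto|]. right.
      apply NNPP; intro NL.
      assert (Ns : ~ supp Y s d) by (intro H; apply NL; exact (HL s Hs d H)).
      destruct (nsupp_ex _ _ _ Ns) as [Ls [HLs NLs]].
      assert (Sup : supports (AbsN Y) (a :: Ls) (cls Y (a,s))).
      { intros p Hp. rewrite act_cls by auto. rewrite (Hp a) by (left; auto).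
        rewrite (HLs p) by (intros b Hb; apply Hp; right; auto). reflexivity. }
      specialize (Hd _ Sup). destruct Hd as [|Hd]; [congruence|auto].
    + intros p q q'. rewrite <- (cls_rep X q). destruct (rep X q) as [a x].
      rewrite act_cls by auto. unfold pset_act.
      split.
      * intro H. apply (abs_iff X Y HX HY f Hf) in H. destruct H as [s [Hs ->]].
        apply (proj2 Hf) in Hs. destruct Hs as [s0 [Hs0 ->]].
        exists (cls Y (a, s0)). split.
        -- apply (abs_iff X Y HX HY f Hf). exists s0; auto.
        -- rewrite act_cls by auto. reflexivity.
      * intros [q0 [H ->]]. apply (abs_iff X Y HX HY f Hf) in H. destruct H as [s0 [Hs0 ->]].
        rewrite act_cls by auto. apply (abs_iff X Y HX HY f Hf). exists (act p s0). split; auto.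
        apply (proj2 Hf). exists s0; auto.
  - destruct (IH1 X Y f HX HY Hf) as [U1 E1]. destruct (IH2 X Y f HX HY Hf) as [U2 E2].
    split.
    + intro u. destruct (U1 (fst u)) as [L1 HL1]. destruct (U2 (snd u)) as [L2 HL2].
      exists (L1 ++ L2). intros v [H1 H2] d Hd. apply NNPP; intro N.
      assert (N1 : ~ supp _ (fst v) d) by (intro H; apply N; apply in_or_app; left; exact (HL1 _ H1 d H)).
      assert (N2 : ~ supp _ (snd v) d) by (intro H; apply N; apply in_or_app; right; exact (HL2 _ H2 d H)).
      destruct (nsupp_ex _ _ _ N1) as [M1 [HM1 NM1]]. destruct (nsupp_ex _ _ _ N2) as [M2 [HM2 NM2]].
      assert (Sup : supports (obj (BProd F1 F2) Y) (M1 ++ M2) v).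
      { intros p Hp.
        assert (A1 : @act (obj F1 Y) p (fst v) = fst v) by (apply HM1; intros b Hb; apply Hp; apply in_or_app; auto).
        assert (A2 : @act (obj F2 Y) p (snd v) = snd v) by (apply HM2; intros b Hb; apply Hp; apply in_or_app; auto).
        change ((@act (obj F1 Y) p (fst v), @act (obj F2 Y) p (snd v)) = v).
        rewrite A1, A2. destruct v; reflexivity. }
      apply Hd in Sup. apply in_app_or in Sup. destruct Sup; auto.
    + intros p u v. simpl. split.
      * intros [H1 H2]. apply E1 in H1. apply E2 in H2.
        destruct H1 as [w1 [H1 e1]], H2 as [w2 [H2 e2]]. exists (w1, w2).
        split; [split; auto|]. destruct v; cbn [fst snd] in *; subst; reflexivity.
      * intros [w [[H1 H2] ->]]. split; [apply E1|apply E2]; eexists; split; eauto.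
  - split.
    + intros [i u]. destruct (proj1 (IH i X Y f HX HY Hf) u) as [L HL]. exists L.
      intros v [w [Hw ->]] d Hd. apply NNPP; intro N.
      assert (Nw : ~ supp _ w d) by (intro H; apply N; exact (HL _ Hw d H)).
      destruct (nsupp_ex _ _ _ Nw) as [M [HM NM]].
      assert (Sup : supports (obj (BCoprod I Fs) Y) M (existT _ i w)).
      { intros p Hp. assert (A : @act (obj (Fs i) Y) p w = w) by (apply HM; auto).
        change (existT (fun i => car (obj (Fs i) Y)) i (@act (obj (Fs i) Y) p w) = existT _ i w).
        rewrite A. reflexivity. }
      apply Hd in Sup. auto.
    + intros p [i u] v. simpl. unfold pset_act. split.
      * intros [w [Hw ->]]. apply (proj2 (IH i X Y f HX HY Hf)) in Hw.
        destruct Hw as [w0 [Hw0 ->]]. exists (existT _ i w0). split; [exists w0; auto | reflexivity].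
      * intros [m [[w [Hw ->]] ->]]. simpl. exists (act p w). split; auto.
        apply (proj2 (IH i X Y f HX HY Hf)). exists w; auto.
Qed.

Lemma L_id (F : BPF) : forall X : Nom, is_nominal X ->
  kl_eq (obj F X) (obj F X) (ext F X X (kl_id X)) (kl_id (obj F X)).
Proof.
  unfold kl_eq, kl_id.
  induction F as [C HC| | |F1 IH1 F2 IH2|I Fs IH]; intros X HX.
  - simpl. tauto.
  - simpl. tauto.
  - intros q q'. cbn [ext]. assert (Hq := cls_rep X q). destruct (rep X q) as [a x].
    split; [intros [s [-> ->]]; auto | intros ->; exists x; auto].
  - intros [u1 u2] [v1 v2]. simpl. rewrite IH1, IH2 by auto. split; [intros [-> ->]; auto|intro E; inversion E; auto].
  - intros [i u] v. simpl. split.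
    + intros [w [Hw ->]]. apply IH in Hw; auto. subst. reflexivity.
    + intros ->. exists u. split; auto. apply IH; auto.
Qed.

Lemma L_comp (F : BPF) : forall (X Y Z : Nom) (f : X -> Y -> Prop) (g : Y -> Z -> Prop),
  is_nominal X -> is_nominal Y -> is_nominal Z ->
  kl_hom X Y f -> kl_hom Y Z g ->
  kl_eq (obj F X) (obj F Z) (ext F X Z (kl_comp X Y Z g f))
    (kl_comp (obj F X) (obj F Y) (obj F Z) (ext F Y Z g) (ext F X Y f)).
Proof.
  unfold kl_eq.
  induction F as [C HC| | |F1 IH1 F2 IH2|I Fs IH]; intros X Y Z f g HX HY HZ Hf Hg.
  - intros c c'. unfold kl_comp. simpl. split; [intros ->; exists c; auto | intros [y [-> ->]]; auto].
  - intros; simpl; tauto.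
  - intros q q'. unfold kl_comp at 2. cbn [ext]. destruct (rep X q) as [a x]. split.
    + intros [s [[y [Hy Hg']] ->]]. exists (cls Y (a,y)). split; [exists y; auto|].
      apply (abs_iff Y Z HY HZ g Hg). exists s; auto.
    + intros [q1 [[y [Hy ->]] H2]]. apply (abs_iff Y Z HY HZ g Hg) in H2.
      destruct H2 as [s [Hs ->]]. exists s. split; auto. exists y; auto.
  - intros [u1 u2] [v1 v2]. cbn [ext obj fst snd]. unfold kl_comp at 3. split.
    + intros [H1 H2]. apply IH1 in H1; auto. apply IH2 in H2; auto.
      destruct H1 as [w1 [H1 H1']], H2 as [w2 [H2 H2']]. exists (w1, w2). cbn [fst snd]. auto.
    + intros [[w1 w2] [[H1 H2] [H1' H2']]]. cbn [fst snd] in *.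
      split; [apply IH1|apply IH2]; auto; eexists; split; eauto.
  - intros [i u] v. unfold kl_comp. simpl. split.
    + intros [w [Hw ->]]. apply IH in Hw; auto. destruct Hw as [y [Hy Hy']].
      exists (existT _ i y). split; [exists y; auto|]. simpl. exists w; auto.
    + intros [m [[y [Hy ->]] [w [Hw ->]]]]. simpl in *. exists w. split; auto.
      apply IH; auto. exists y; auto.
Qed.

Lemma L_J (F : BPF) : forall (X Y : Nom) (f : X -> Y),
  kl_eq (obj F X) (obj F Y) (ext F X Y (J X Y f)) (J (obj F X) (obj F Y) (fmap F X Y f)).
Proof.
  unfold kl_eq, J.
  induction F as [C HC| | |F1 IH1 F2 IH2|I Fs IH]; intros X Y f.
  - simpl. tauto.
  - simpl. tauto.
  - intros q q'. cbn [ext fmap]. destruct (rep X q) as [a x].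
    split; [intros [s [-> ->]]; auto | intros ->; exists (f x); auto].
  - intros [u1 u2] [v1 v2]. simpl. rewrite IH1, IH2. split; [intros [-> ->]; auto|intro E; inversion E; auto].
  - intros [i u] v. simpl. split.
    + intros [w [Hw ->]]. apply IH in Hw. subst. reflexivity.
    + intros ->. exists (fmap (Fs i) X Y f u). split; auto. apply IH; auto.
Qed.

Lemma L_mono (F : BPF) : forall (X Y : Nom) (f g : X -> Y -> Prop),
  kl_le X Y f g -> kl_le (obj F X) (obj F Y) (ext F X Y f) (ext F X Y g).
Proof.
  unfold kl_le.
  induction F as [C HC| | |F1 IH1 F2 IH2|I Fs IH]; intros X Y f g H.
  - simpl; auto.
  - simpl; auto.
  - intros q q'. cbn [ext]. destruct (rep X q) as [a x]. intros [s [Hs ->]]; eauto.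
  - intros u v [H1 H2]. split; [eapply IH1|eapply IH2]; eauto.
  - intros [i u] v [w [Hw ->]]. exists w. split; auto. eapply IH; eauto.
Qed.
Theorem corollary3p13 (F : BPF) :
  (* ext F sends Kleisli morphisms to Kleisli morphisms *)
  (forall (X Y : Nom) (f : X -> Y -> Prop),
     is_nominal X -> is_nominal Y -> kl_hom X Y f ->
     kl_hom (obj F X) (obj F Y) (ext F X Y f)) /\
  (* it preserves identities *)
  (forall X : Nom, is_nominal X ->
     kl_eq (obj F X) (obj F X) (ext F X X (kl_id X)) (kl_id (obj F X))) /\
  (* it preserves Kleisli composition *)
  (forall (X Y Z : Nom) (f : X -> Y -> Prop) (g : Y -> Z -> Prop),
     is_nominal X -> is_nominal Y -> is_nominal Z ->
     kl_hom X Y f -> kl_hom Y Z g ->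
     kl_eq (obj F X) (obj F Z) (ext F X Z (kl_comp X Y Z g f))
       (kl_comp (obj F X) (obj F Y) (obj F Z) (ext F Y Z g) (ext F X Y f))) /\
  (* it is an extension: Fbar J = J F *)
  (forall (X Y : Nom) (f : X -> Y),
     is_nominal X -> is_nominal Y -> equivariant X Y f ->
     kl_eq (obj F X) (obj F Y) (ext F X Y (J X Y f)) (J (obj F X) (obj F Y) (fmap F X Y f))) /\
  (* it is locally monotone *)
  (forall (X Y : Nom) (f g : X -> Y -> Prop),
     is_nominal X -> is_nominal Y -> kl_hom X Y f -> kl_hom X Y g ->
     kl_le X Y f g -> kl_le (obj F X) (obj F Y) (ext F X Y f) (ext F X Y g)).
Proof.
  split; [intros; apply L_hom; auto|].
  split; [intros; apply L_id; auto|].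
  split; [intros; apply L_comp; auto|].
  split; [intros; apply L_J; auto|].
  intros; apply L_mono; auto.
Qed.
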